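(* A relation $R\subseteq\{0,1\}^V$ is a delta matroid if and only if its indicator signature is terraced.
   Context: $R$ is a delta matroid if for all $x,y\in R$ and all $i$ with $x_i\ne y_i$ there exists $j$ with $x_j\ne y_j$ (possibly $j=i$) such that $x^{\{i,j\}}\in R$, where $x^U$ denotes $x$ with the coordinates in $U$ flipped. A partial configuration $p$ of $V$ is an element of $\{0,1\}^{\mathrm{dom}(p)}$ with $\mathrm{dom}(p)\subseteq V$, and the pinning of a signature $F$ on $V$ is $F_p(x)=F(x,p)$ on $V\setminus\mathrm{dom}(p)$; $p^{\{i\}}$ is $p$ with coordinate $i$ flipped. A signature $F:\{0,1\}^V\to\mathbb R_{\ge0}$ is terraced if for every partial configuration $p$ of $V$ and all $i,j\in\mathrm{dom}(p)$: if $F_p$ is identically zero then $F_{p^{\{i\}}}$ and $F_{p^{\{j\}}}$ are linearly dependent (one is a scalar multiple of the other). *)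

(* Defs.v *)
From HB Require Import structures.
From mathcomp Require Import all_boot all_order all_algebra.
Set Implicit Arguments. Unset Strict Implicit. Unset Printing Implicit Defensive.
Import Order.TTheory GRing.Theory Num.Theory.
Local Open Scope ring_scope.

Definition flipU (V : finType) (x : {ffun V -> bool}) (U : {set V})
  : {ffun V -> bool} := [ffun k => if k \in U then ~~ x k else x k].

Definition delta_matroid (V : finType) (R : {set {ffun V -> bool}}) : Prop :=
  forall x y, x \in R -> y \in R -> forall i, x i != y i ->
    exists j, x j != y j /\ flipU x [set i; j] \in R.

(* Partial configuration p of V: p k = Some b iff k \in dom(p) with value b. *)
Definition dom (V : finType) (p : {ffun V -> option bool}) : {set V} :=
  [set k | p k != None].

Definition flipP (V : finType) (p : {ffun V -> option bool}) (i : V)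
  : {ffun V -> option bool} :=
  [ffun k => if k == i then omap negb (p k) else p k].

Definition merge (V : finType) (x : {ffun V -> bool}) (p : {ffun V -> option bool})
  : {ffun V -> bool} :=
  [ffun k => if p k is Some b then b else x k].

(* Pinning F_p(x) = F(x, p). It is represented as a function of a full
   configuration x that only depends on the coordinates of x outside dom(p). *)
Definition pin (V : finType) (Rf : realFieldType) (F : {ffun V -> bool} -> Rf)
  (p : {ffun V -> option bool}) : {ffun V -> bool} -> Rf :=
  fun x => F (merge x p).

Definition lin_dep (T : Type) (Rf : realFieldType) (f g : T -> Rf) : Prop :=
  (exists c : Rf, forall x, f x = c * g x) \/ (exists c : Rf, forall x, g x = c * f x).

Definition terraced (V : finType) (Rf : realFieldType) (F : {ffun V -> bool} -> Rf)
  : Prop :=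
  forall (p : {ffun V -> option bool}) (i j : V), i \in dom p -> j \in dom p ->
    (forall x, pin F p x = 0) ->
    lin_dep (pin F (flipP p i)) (pin F (flipP p j)).

Definition indicator (V : finType) (Rf : realFieldType) (R : {set {ffun V -> bool}})
  : {ffun V -> bool} -> Rf :=
  fun x => if x \in R then 1 else 0.

(* Main.v *)
Require Import Defs.
From HB Require Import structures.
From mathcomp Require Import all_boot all_order all_algebra.
From mathcomp Require Import zify.
Set Implicit Arguments. Unset Strict Implicit. Unset Printing Implicit Defensive.
Import Order.TTheory GRing.Theory Num.Theory.
Lemma dm_aux (V : finType) (R : {set {ffun V -> bool}}) (p : {ffun V -> option bool}) i j :
  delta_matroid R -> i != j -> i \in dom p -> j \in dom p ->
  (forall z, Defs.merge z p \notin R) -> forall b z,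
  Defs.merge b (flipP p j) \in R -> Defs.merge z (flipP p i) \in R -> Defs.merge z (flipP p j) \in R.
Proof.
move=> dm ij ip jp p0 b z Hb Hz; apply/negPn/negP => Hn.
move: ip jp; rewrite !inE.
case pi: (p i) => [ci|] // _; case pj: (p j) => [cj|] // _.
have ji : j != i by rewrite eq_sym.
have Hne : (Defs.merge z (flipP p i)) i != (Defs.merge b (flipP p j)) i.
  rewrite !ffunE /= eqxx (negbTE ij) pi /=; by case: ci pi.
have [k [Hk Hf]] := dm _ _ Hz Hb i Hne.
have [ki|ki] := eqVneq k i.
  subst k; move/negP: (p0 z); apply; congr (_ \in R): Hf.
  apply/ffunP => l; rewrite !ffunE !inE orbb.
  have [->|li] := eqVneq l i; rewrite ?eqxx ?pi /= ?negbK //.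
have [kj|kj] := eqVneq k j.
  subst k; move/negP: Hn; apply; congr (_ \in R): Hf.
  apply/ffunP => l; rewrite !ffunE !inE.
  have [->|li] := eqVneq l i.
    by rewrite (negbTE ij) pi /= negbK.
  have [->|lj] := eqVneq l j; first by rewrite /= pj.
  by rewrite /= ?(negbTE lj) ?(negbTE li).
case pk: (p k) => [ck|].
  by move: Hk; rewrite !ffunE (negbTE ki) (negbTE kj) pk eqxx.
move/negP: (p0 (flipU z [set k])); apply; congr (_ \in R): Hf.
apply/ffunP => l; rewrite !ffunE !inE.
have [->|li] := eqVneq l i; first by rewrite /= ?eqxx pi /= negbK.
have [->|lk] := eqVneq l k; first by rewrite /= pk.
rewrite /=; case: (p l) => // ; by rewrite ffunE inE (negbTE lk).
Qed.
Local Open Scope ring_scope.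
Lemma dir1 (Rf : realFieldType) (V : finType) (R : {set {ffun V -> bool}}) :
  delta_matroid R -> terraced (indicator Rf R).
Proof.
move=> dm p i j ip jp H0.
have p0 : forall z, Defs.merge z p \notin R.
  move=> z; apply/negP => Hz; have := H0 z; rewrite /pin /indicator Hz.
  by move/eqP; rewrite oner_eq0.
have [eij|nij] := eqVneq i j.
  by subst j; left; exists 1 => x; rewrite mul1r.
case: (boolP [exists a, Defs.merge a (flipP p i) \in R]) => [/existsP [a Ha]|Ha]; last first.
  left; exists 0 => x; rewrite mul0r /pin /indicator.
  by case: ifP => // H; move/existsP: Ha => Ha; exfalso; apply: Ha; exists x.
case: (boolP [exists b, Defs.merge b (flipP p j) \in R]) => [/existsP [b Hb]|Hb]; last first.
  right; exists 0 => x; rewrite mul0r /pin /indicator.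
  by case: ifP => // H; move/existsP: Hb => Hb; exfalso; apply: Hb; exists x.
left; exists 1 => x; rewrite mul1r /pin /indicator.
have nji : j != i by rewrite eq_sym.
case: (boolP (Defs.merge x (flipP p i) \in R)) => Hx.
  by rewrite (dm_aux dm nij ip jp p0 Hb Hx).
case: (boolP (Defs.merge x (flipP p j) \in R)) => Hy //.
by rewrite (dm_aux dm nji jp ip p0 Ha Hy) in Hx.
Qed.
Definition diffs (V : finType) (x y : {ffun V -> bool}) : {set V} := [set k | x k != y k].

Lemma dir2 (Rf : realFieldType) (V : finType) (R : {set {ffun V -> bool}}) :
  terraced (indicator Rf R) -> delta_matroid R.
Proof.
move=> tr.
suff H : forall n x y, (#|diffs x y| <= n)%N -> x \in R -> y \in R -> forall i, x i != y i ->
    exists j, x j != y j /\ flipU x [set i; j] \in R.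
  by move=> x y; apply: (H _ x y (leqnn _)).
elim=> [|n IH] x y.
  move=> Hc _ _ i Hi; exfalso; move: Hc; rewrite leqn0 => /eqP/cards0_eq/setP/(_ i).
  by rewrite !inE Hi.
move=> Hc xR yR i Hi.
case: (boolP [exists j, (j != i) && (x j != y j)]) => [/existsP [j /andP [ji Hj]]|Hno]; last first.
  exists i; split => //; congr (_ \in R): yR; apply/ffunP => l; rewrite !ffunE !inE orbb.
  have [->|li] := eqVneq l i; first by move: Hi; case: (x i); case: (y i).
  apply/eqP; apply: contraR Hno => Hl; apply/existsP; exists l; rewrite li /=.
  by rewrite eq_sym.
case: (boolP [exists w, [&& w \in R, w i == y i, w j == x j &
     [forall k, (x k == y k) ==> (w k == x k)]]]) => [/existsP [w /and4P [wR /eqP wi /eqP wj /forallP wk]]|Hw].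
  have sub : diffs x w \subset diffs x y :\ j.
    apply/subsetP => k; rewrite !inE => Hk; apply/andP; split.
      by apply: contraNneq Hk => ->; rewrite wj.
    by apply: contraNneq Hk => /eqP Hk; have := wk k; rewrite Hk /= eq_sym.
  have cw : (#|diffs x w| <= n)%N.
    have := subset_leq_card sub; have := cardsD1 j (diffs x y).
    rewrite inE Hj /=; move: Hc; lia.
  have xwi : x i != w i by rewrite wi.
  have [k [Hk Hf]] := IH x w cw xR wR i xwi.
  exists k; split => //; apply: contraNneq Hk => Hk; have := wk k.
  by rewrite Hk eqxx /= eq_sym.
pose p : {ffun V -> option bool} := [ffun k => if k == i then Some (y i)
   else if k == j then Some (x j) else if x k == y k then Some (x k) else None].
have ip : i \in dom p by rewrite inE ffunE eqxx.
have jp : j \in dom p by rewrite inE ffunE (negbTE ji) eqxx.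
have ij : i != j by rewrite eq_sym.
have p0 : forall z, pin (indicator Rf R) p z = 0.
  move=> z; rewrite /pin /indicator; case: ifP => // mR; exfalso.
  move/negP: Hw; apply; apply/existsP; exists (Defs.merge z p); rewrite mR /=.
  rewrite !ffunE eqxx (negbTE ji) eqxx /= eqxx /= eqxx /=; apply/forallP => k.
  apply/implyP => e; rewrite !ffunE.
  have [ki|ki] := eqVneq k i; first by subst k; rewrite e in Hi.
  have [kj|kj] := eqVneq k j; first by subst k; rewrite e in Hj.
  by rewrite e.
have bneq : forall a b : bool, a != b -> ~~ a = b by case; case.
have bneq' : forall a b : bool, a != b -> ~~ b = a by case; case.
have Ex : Defs.merge x (flipP p i) = x.
  apply/ffunP => l; rewrite !ffunE.
  have [->|li] := eqVneq l i; rewrite /= ?eqxx /=; first exact: bneq'.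
  have [->|lj] := eqVneq l j => //.
  by case: ifP => // /eqP.
have Ey : Defs.merge y (flipP p j) = y.
  apply/ffunP => l; rewrite !ffunE.
  have [->|li] := eqVneq l i; rewrite /= ?eqxx ?(negbTE ij) //.
  have [->|lj] := eqVneq l j; rewrite /= ?eqxx ?(negbTE ji) /=; first exact: bneq.
  by case: ifP => // /eqP.
have Exj : Defs.merge x (flipP p j) = flipU x [set i; j].
  apply/ffunP => l; rewrite !ffunE !inE.
  have [->|li] := eqVneq l i; rewrite /= ?eqxx ?(negbTE ij) /=; first by apply/esym/bneq.
  have [->|lj] := eqVneq l j; rewrite /= ?eqxx ?(negbTE ji) //.
  by case: ifP => // /eqP.
exists j; split => //.
have fx : pin (indicator Rf R) (flipP p i) x = 1 by rewrite /pin /indicator Ex xR.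
have gy : pin (indicator Rf R) (flipP p j) y = 1 by rewrite /pin /indicator Ey yR.
have gx : pin (indicator Rf R) (flipP p j) x != 0.
  case: (tr p i j ip jp p0) => [[c Hc2]|[c Hc2]].
    apply/eqP => g0; have := Hc2 x; rewrite fx g0 mulr0 => /eqP; by rewrite oner_eq0.
  rewrite Hc2 fx mulr1; apply/eqP => c0; have := Hc2 y; rewrite gy c0 mul0r => /eqP.
  by rewrite oner_eq0.
move: gx; rewrite /pin /indicator Exj; by case: ifP; rewrite ?eqxx.
Qed.

Theorem mainTheorem11 (Rf : realFieldType) (V : finType) (R : {set {ffun V -> bool}}) :
  delta_matroid R <-> terraced (indicator Rf R).
Proof. split; [exact: dir1 | exact: dir2]. Qed.
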